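(* With $\omega$ and $(\mathbb G,E)$ as below, $\mathrm{supp}(\omega)=\mathbb G$.
   Context: $D$ finite, $m\ge2$, $\Gamma$ a finite set of cost functions $f:D^n\to\mathbb Q\cup\{\infty\}$, $\mathrm{dom} f=\{x:f(x)<\infty\}$. Maps $\mathbf g=(g_1,\dots,g_m):D^m\to D^m$ act on $x=(x^1,\dots,x^m)\in[D^n]^m$ by $\mathbf g(x)=(g_1(x),\dots,g_m(x))$ with $g_i$ applied coordinatewise; $f^m(x)=\frac1m\sum_i f(x^i)$. A generalized fractional polymorphism of $\Gamma$ of arity $m\to m$ is a finitely supported probability distribution $\rho$ on such maps with $\sum_{\mathbf g}\rho(\mathbf g)f^m(\mathbf g(x))\le f^m(x)$ for all $f\in\Gamma$, $x\in[\mathrm{dom} f]^m$. For $x\in D^m$ and permutation $\pi$, $x^\pi=(x_{\pi(1)},\dots,x_{\pi(m)})$ and $\mathbf g^\pi=(g_{\pi(1)},\dots,g_{\pi(m)})$; $\Omega$ is the set of maps $\mathbf g$ with $\mathbf g^\pi(x)=\mathbf g(x^\pi)$ for all $x,\pi$. Let $\omega$ be a generalized fractional polymorphism of $\Gamma$ of arity $m\to m$ with $\mathrm{supp}(\omega)\subseteq\Omega$ whose support contains the support of every other generalized fractional polymorphism of $\Gamma$ of arity $m\to m$ with support in $\Omega$ (such $\omega$ exists). Let $\mathbb G=\{\mathbf g_k\circ\dots\circ\mathbf g_1:k\ge0,\mathbf g_i\in\mathrm{supp}(\omega)\}$ (with $k=0$ giving the identity $\mathbb 1$) and $E=\{(\mathbf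 g,\mathbf h\circ\mathbf g):\mathbf g\in\mathbb G,\mathbf h\in\mathrm{supp}(\omega)\}$. *)

(* Defs.v *)
From HB Require Import structures.
From mathcomp Require Import all_boot all_order all_algebra all_fingroup.
Set Implicit Arguments. Unset Strict Implicit. Unset Printing Implicit Defensive.
Import Order.TTheory GRing.Theory Num.Theory.
Local Open Scope ring_scope.

(* Maps g = (g_1,...,g_m) : D^m -> D^m ; component g_i y = tnth (g y) i. *)
Definition map_t (D : finType) (m : nat) := {ffun m.-tuple D -> m.-tuple D}.

Definition col (D : finType) (m n : nat) (x : m.-tuple (n.-tuple D)) (j : 'I_n)
  : m.-tuple D := [tuple tnth (tnth x i) j | i < m].

Definition app (D : finType) (m n : nat) (g : map_t D m)
  (x : m.-tuple (n.-tuple D)) : m.-tuple (n.-tuple D) :=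
  [tuple [tuple tnth (g (col x j)) i | j < n] | i < m].

(* Cost functions D^n -> Q u {oo}, with None = oo. *)
Definition in_dom (D : finType) (n : nat) (f : n.-tuple D -> option rat)
  (t : n.-tuple D) : bool := f t != None.

(* finite part of f^m(x) = 1/m sum_i f(x^i) (meaningful when all x^i in dom f) *)
Definition fm (R : realFieldType) (D : finType) (m n : nat)
  (f : n.-tuple D -> option rat) (x : m.-tuple (n.-tuple D)) : R :=
  (m%:R)^-1 * \sum_(i < m) ratr (odflt 0 (f (tnth x i))).

Definition supp (R : realFieldType) (D : finType) (m : nat)
  (rho : {ffun map_t D m -> R}) : pred (map_t D m) := fun g => rho g != 0.

(* The inequality
   sum_g rho(g) f^m(g(x)) <= f^m(x) with values in Q u {oo} (RHS finite since
   x in [dom f]^m) means: every g in the support maps x into [dom f]^m, and the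
   finite inequality holds. *)
Definition gfp (R : realFieldType) (D : finType) (m : nat) (I : finType)
  (ar : I -> nat) (Gam : forall i : I, (ar i).-tuple D -> option rat)
  (rho : {ffun map_t D m -> R}) : Prop :=
  [/\ (forall g, 0 <= rho g),
      \sum_g rho g = 1 &
      forall (k : I) (x : m.-tuple ((ar k).-tuple D)),
        (forall i : 'I_m, in_dom (Gam k) (tnth x i)) ->
        (forall g, supp rho g -> forall i : 'I_m, in_dom (Gam k) (tnth (app g x) i))
        /\ \sum_g rho g * fm R (Gam k) (app g x) <= fm R (Gam k) x].

Definition perm_tuple (D : finType) (m : nat) (p : 'S_m) (y : m.-tuple D)
  : m.-tuple D := [tuple tnth y (p i) | i < m].

(* Omega: g^pi(x) = g(x^pi) for all x, pi *)
Definition inOmega (D : finType) (m : nat) (g : map_t D m) : Prop :=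
  forall (y : m.-tuple D) (p : 'S_m) (i : 'I_m),
    tnth (g y) (p i) = tnth (g (perm_tuple p y)) i.

Definition idmap_t (D : finType) (m : nat) : map_t D m := [ffun y => y].

Definition comp_t (D : finType) (m : nat) (h g : map_t D m) : map_t D m :=
  [ffun y => h (g y)].

(* GG = { g_k o ... o g_1 : k >= 0, g_i in supp omega } ; the list s = [g_1;...;g_k] *)
Definition inGG (R : realFieldType) (D : finType) (m : nat)
  (omega : {ffun map_t D m -> R}) (g : map_t D m) : Prop :=
  exists s : seq (map_t D m),
    all (supp omega) s /\ g = foldl (fun acc h => comp_t h acc) (idmap_t D m) s.

(* E = { (g, h o g) : g in GG, h in supp omega } (not needed for the statement) *)
Definition inE (R : realFieldType) (D : finType) (m : nat)
  (omega : {ffun map_t D m -> R}) (g g' : map_t D m) : Prop :=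
  inGG omega g /\ exists2 h, supp omega h & g' = comp_t h g.

(* Main.v *)
Require Import Defs.
From HB Require Import structures.
From mathcomp Require Import all_boot all_order all_algebra all_fingroup.
From mathcomp Require Import lra ring.
Import Order.TTheory GRing.Theory Num.Theory.
Local Open Scope ring_scope.
Set Implicit Arguments. Unset Strict Implicit.

Section Aux.
Variables (R : realFieldType) (D : finType) (m : nat).
Implicit Types (g h : map_t D m).

Lemma sum_ind (T : finType) (a : T) (c : T -> R) :
  \sum_k ((a == k)%:R * c k) = c a.
Proof.
rewrite (bigD1 a) //= eqxx mul1r big1 ?addr0 // => k /negbTE nk.
by rewrite eq_sym nk mul0r.
Qed.

Definition push (J : finType) (w : J -> R) (F : J -> map_t D m)
  : {ffun map_t D m -> R} := [ffun k => \sum_j w j * (F j == k)%:R].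

Lemma push_sum (J : finType) (w : J -> R) F (phi : map_t D m -> R) :
  \sum_k push w F k * phi k = \sum_j w j * phi (F j).
Proof.
rewrite /push.
under eq_bigr => k _ do rewrite ffunE mulr_suml.
rewrite exchange_big /=; apply: eq_bigr => j _.
rewrite -[RHS](sum_ind (F j) (fun k => w j * phi k)).
by apply: eq_bigr => k _; rewrite mulrCA mulrA.
Qed.

Lemma push_supp (J : finType) (w : J -> R) F k :
  supp (push w F) k -> exists2 j, w j != 0 & F j = k.
Proof.
rewrite /supp /push ffunE => H.
case: (boolP [exists j, (w j != 0) && (F j == k)]).
  by case/existsP => j /andP [H1 /eqP H2]; exists j.
move/existsPn => Hn; case/eqP: H; apply: big1 => j _.
move: (Hn j); rewrite negb_and negbK; case/orP => [/eqP -> | /negbTE ->].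
  by rewrite mul0r.
by rewrite mulr0.
Qed.

Lemma push_supp_in (J : finType) (w : J -> R) F j :
  (forall j, 0 <= w j) -> w j != 0 -> supp (push w F) (F j).
Proof.
move=> H0 Hj; rewrite /supp /push ffunE.
rewrite (bigD1 j) //= eqxx mulr1.
have H1 : 0 <= \sum_(i | i != j) w i * (F i == F j)%:R.
  by apply: sumr_ge0 => i _; apply: mulr_ge0.
have H2 : 0 < w j by rewrite lt_def Hj H0.
by rewrite gt_eqF // ltr_pwDl.
Qed.

Lemma app_id n (x : m.-tuple (n.-tuple D)) : app (idmap_t D m) x = x.
Proof.
apply: eq_from_tnth => i; rewrite tnth_mktuple.
by apply: eq_from_tnth => j; rewrite tnth_mktuple ffunE /Defs.col tnth_mktuple.
Qed.

Lemma col_app n g (x : m.-tuple (n.-tuple D)) j : Defs.col (app g x) j = g (Defs.col x j).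
Proof.
by apply: eq_from_tnth => i; rewrite /Defs.col /app !tnth_mktuple.
Qed.

Lemma app_comp n h g (x : m.-tuple (n.-tuple D)) :
  app (comp_t h g) x = app h (app g x).
Proof.
apply: eq_from_tnth => i; rewrite /app !tnth_mktuple.
apply: eq_from_tnth => j; rewrite !tnth_mktuple ffunE.
by rewrite -col_app.
Qed.

Lemma push_gfp (I : finType) (ar : I -> nat)
  (Gam : forall i : I, (ar i).-tuple D -> option rat) (J : finType)
  (w : J -> R) (F : J -> map_t D m) :
  (forall j, 0 <= w j) -> \sum_j w j = 1 ->
  (forall k (x : m.-tuple ((ar k).-tuple D)),
     (forall i, in_dom (Gam k) (tnth x i)) ->
     (forall j, w j != 0 -> forall i, in_dom (Gam k) (tnth (app (F j) x) i)) /\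
     \sum_j w j * fm R (Gam k) (app (F j) x) <= fm R (Gam k) x) ->
  gfp Gam (push w F).
Proof.
move=> H0 H1 H; split.
- move=> g; rewrite ffunE; apply: sumr_ge0 => j _.
  by apply: mulr_ge0; [apply: H0 | apply: ler0n].
- have := push_sum w F (fun _ => 1).
  under eq_bigr do rewrite mulr1.
  by under [X in _ = X -> _]eq_bigr do rewrite mulr1; move=> ->.
- move=> k x hx; have [H2 H3] := H k x hx; split.
    by move=> g /push_supp [j wj <-]; apply: H2.
  by rewrite push_sum.
Qed.

Lemma sum_pair (A B : finType) (f : A * B -> R) :
  \sum_p f p = \sum_a \sum_b f (a, b).
Proof. by rewrite pair_bigA; apply: eq_bigr => -[]. Qed.

End Aux.

Theorem proposition6p2 (R : realFieldType) (D : finType) (m : nat)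
  (I : finType) (ar : I -> nat) (Gam : forall i : I, (ar i).-tuple D -> option rat)
  (omega : {ffun map_t D m -> R}) :
  (2 <= m)%N ->
  gfp Gam omega ->
  (forall g, supp omega g -> inOmega g) ->
  (forall rho : {ffun map_t D m -> R}, gfp Gam rho ->
     (forall g, supp rho g -> inOmega g) ->
     forall g, supp rho g -> supp omega g) ->
  forall g : map_t D m, supp omega g <-> inGG omega g.
Proof.
move=> _ [W0 W1 W] HO Hmax.
have Hid : supp omega (idmap_t D m).
  pose w := fun p : bool * map_t D m =>
    if p.1 then omega p.2 / 2 else (idmap_t D m == p.2)%:R / 2.
  pose F := fun p : bool * map_t D m => p.2.
  have w0 : forall j, 0 <= w j.
    by case=> [[] g]; rewrite /w /=; apply: divr_ge0 => //; apply: ler0n.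
  have -> : idmap_t D m = F (false, idmap_t D m) by [].
  apply: (Hmax (push w F)); last first.
    apply: push_supp_in => //; rewrite /w /= eqxx mul1r.
    by apply: invr_neq0; rewrite pnatr_eq0.
  - move=> k /push_supp [[b h] wj <-]; rewrite /F /=.
    case: b wj; rewrite /w /=.
      by move=> Hw; apply: HO; rewrite /supp; move: Hw; rewrite mulf_eq0 negb_or => /andP [].
    rewrite mulf_eq0 negb_or pnatr_eq0 eqb0 negbK => /andP [/eqP <- _].
    by move=> y p i; rewrite !ffunE /perm_tuple tnth_mktuple.
  - have Hs : forall phi : map_t D m -> R,
      \sum_j w j * phi (F j) = (\sum_g omega g * phi g) / 2 + phi (idmap_t D m) / 2.
      move=> phi; rewrite sum_pair /= big_bool /=; congr (_ + _).
        by rewrite mulr_suml; apply: eq_bigr => g _; rewrite /w /F /= mulrAC.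
      rewrite -(sum_ind (idmap_t D m) (fun g => phi g / 2)).
      by apply: eq_bigr => g _; rewrite /w /F /= mulrAC mulrA.
    apply: push_gfp => //.
      have := Hs (fun _ => 1); under eq_bigr do rewrite mulr1.
      under [X in _ = (X / 2 + _) -> _]eq_bigr do rewrite mulr1.
      move=> ->; rewrite W1; lra.
    move=> k x hx; have [Hd Hi] := W k x hx; split.
      case=> [[] h]; rewrite /w /F /=.
        by move=> Hw; apply: Hd; rewrite /supp; move: Hw; rewrite mulf_eq0 negb_or => /andP [].
      rewrite mulf_eq0 negb_or pnatr_eq0 eqb0 negbK => /andP [/eqP <- _].
      by rewrite app_id.
    rewrite (Hs (fun g => fm R (Gam k) (app g x))) app_id.
    move: Hi; set a := (\sum_g _); set b := fm R _ x; move=> Hi; lra.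
have Hcomp : forall g h, supp omega g -> supp omega h -> supp omega (comp_t h g).
  move=> g h Hg Hh.
  pose w := fun p : map_t D m * map_t D m => omega p.1 * omega p.2.
  pose F := fun p : map_t D m * map_t D m => comp_t p.2 p.1.
  have w0 : forall j, 0 <= w j by move=> j; apply: mulr_ge0.
  have wnz : forall j, w j != 0 -> supp omega j.1 /\ supp omega j.2.
    by move=> j; rewrite /w mulf_eq0 negb_or => /andP [].
  have -> : comp_t h g = F (g, h) by [].
  apply: (Hmax (push w F)); last first.
    by apply: push_supp_in => //; rewrite /w /= mulf_neq0.
  - move=> k /push_supp [j /wnz [H1 H2] <-]; rewrite /F.
    move=> y p i; rewrite !ffunE (HO _ H2).
    congr (tnth (j.2 _) i); apply: eq_from_tnth => i'.
    by rewrite /perm_tuple !tnth_mktuple (HO _ H1).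
  - apply: push_gfp => //.
      rewrite sum_pair /=; under eq_bigr do rewrite /w /= -mulr_sumr.
      by rewrite -mulr_suml W1 mul1r.
    move=> k x hx; have [Hd Hi] := W k x hx; split.
      move=> j /wnz [H1 H2] i; rewrite /F app_comp.
      by have [Hd' _] := W k _ (Hd _ H1); apply: Hd'.
    rewrite sum_pair /=; apply: le_trans Hi; apply: ler_sum => a _.
    under eq_bigr do rewrite /w /F /= -mulrA app_comp.
    rewrite -mulr_sumr; have [->|Ha] := eqVneq (omega a) 0; first by rewrite !mul0r.
    apply: ler_wpM2l => //.
    by have [_ Hi'] := W k _ (Hd _ Ha).
move=> g; split.
  move=> Hg; exists [:: g]; split; first by rewrite /= Hg.
  by apply/ffunP => y; rewrite /= !ffunE.
case=> s [Hs ->]; elim: s (idmap_t D m) Hid Hs => [|h s IH] acc Hacc //=.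
case/andP => Hh Hs; apply: IH => //; exact: Hcomp.
Qed.
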